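(* Fix $\lambda \geqslant 0$ and let $g(\lambda) = (1-e^{-\lambda})/\lambda$ for $\lambda>0$, $g(0)=1$. For a compactly supported Borel probability measure $\rho$ on $\mathbb R$ with $\operatorname{supp}\rho \subset [0,+\infty)$ and $\langle \rho, x\rangle = \int x\,d\rho(x) \neq 0$, define the measure $$A(\rho) = \left(1 - g(\lambda) + g(\lambda)\frac{x}{\langle \rho, x\rangle}\right)\rho,$$ i.e. the measure with density $x \mapsto 1 - g(\lambda) + g(\lambda)x/\langle\rho,x\rangle$ with respect to $\rho$. Let $\rho_0$ be such a measure, let $\rho_t = A^t(\rho_0)$ for $t\in\mathbb N$, and let $x_0 = \sup\operatorname{supp}\rho_0$. Then $\rho_t \to \delta_{x_0}$ as $t \to +\infty$, in the sense that $\int\phi\,d\rho_t \to \phi(x_0)$ for every continuous compactly supported function $\phi\colon\mathbb R\to\mathbb R$.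
   Context: $\delta_a$ denotes the Dirac measure at $a$. Convergence of measures is the weak (vague) convergence against continuous compactly supported test functions. *)

(* Defs.v *)
From HB Require Import structures.
From mathcomp Require Import all_boot all_order all_algebra.
From mathcomp Require Import all_classical all_reals all_analysis.
Set Implicit Arguments. Unset Strict Implicit. Unset Printing Implicit Defensive.
Import Order.TTheory GRing.Theory Num.Theory.
Import numFieldNormedType.Exports.
Local Open Scope classical_set_scope.
Local Open Scope ring_scope.

Definition gfun (R : realType) (lam : R) : R :=
  if lam == 0 then 1 else (1 - expR (- lam)) / lam.

Definition msupp (R : realType) (mu : {measure set R -> \bar R}) : set R :=
  [set x | forall U : set R, open U -> U x -> (0 < mu U)%E].

Definition mean (R : realType) (mu : {measure set R -> \bar R}) : R :=
  Rintegral mu setT (fun x => x).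

Definition Adens (R : realType) (lam : R) (mu : {measure set R -> \bar R})
  (x : R) : R :=
  1 - gfun lam + gfun lam * x / mean mu.

(* Main.v *)
Require Import Defs.
From HB Require Import structures.
From mathcomp Require Import all_boot all_order all_algebra.
From mathcomp Require Import all_classical all_reals all_analysis.
From mathcomp Require Import measurable_realfun ring lra.
Import Order.TTheory GRing.Theory Num.Theory.
Import numFieldNormedType.Exports.
Local Open Scope classical_set_scope.
Local Open Scope ring_scope.
Section Supp.
Context {R : realType} (mu : {measure set R -> \bar R}).

Lemma notsupp x : ~ msupp mu x -> exists U, [/\ open U, U x & mu U = 0%E].
Proof.
move=> /existsNP [U] /not_implyP [oU] /not_implyP [Ux] /negP; rewrite -leNgt => H.
by exists U; split => //; apply/eqP; rewrite eq_le H measure_ge0.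
Qed.

Lemma seq_negl (f : R -> set R) (s : seq R) :
  (forall i, i \in s -> mu.-negligible (f i)) ->
  mu.-negligible [set x | exists2 i, i \in s & f i x].
Proof.
elim: s => [_|a s IH H].
  by apply: (negligibleS _ (negligible_set0 mu)) => x [].
apply: (negligibleS _ (negligibleU (H a (mem_head _ _)) (IH _))).
  move=> x [i]; rewrite in_cons => /orP[/eqP->|iS] fx; [by left|right].
  by exists i.
by move=> i iS; apply: H; rewrite in_cons iS orbT.
Qed.

Lemma compact_negl K : compact K -> K `<=` ~` msupp mu -> mu.-negligible K.
Proof.
move=> cK Ksupp.
have /choice [f Hf] : forall x : R, exists U : set R,
    open U /\ (K x -> U x /\ mu U = 0%E).
  move=> x; have [Kx|nKx] := pselect (K x).
    by have [U [oU Ux U0]] := @notsupp x (Ksupp x Kx); exists U.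
  by exists set0; split; [exact: open0|].
move: cK; rewrite compact_cover => /(_ R K f).
case.
- by move=> i _; case: (Hf i).
- by move=> x Kx; exists x => //; case: (Hf x) => _ /(_ Kx) [].
move=> D' D'K Kcov.
apply: (negligibleS Kcov).
have H1 : mu.-negligible [set x | exists2 i, i \in finmap.enum_fset D' & f i x].
  apply: seq_negl => i Di; have := D'K i Di; rewrite in_setE => Ki.
  case: (Hf i) => oi /(_ Ki) [_ f0].
  by apply/negligibleP => //; exact: open_measurable.
by apply: negligibleS H1 => x [i Di fi]; exists i.
Qed.

Lemma right_negl a : (forall x, a < x -> ~ msupp mu x) ->
  mu.-negligible `]a, +oo[%classic.
Proof.
move=> H.
apply: (negligibleS _ (@negligible_bigcup _ _ _ mu
   (fun n => `[a + (n.+1%:R)^-1, a + n.+1%:R]%classic) _)).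
- move=> x /=; rewrite in_itv /= andbT => ax.
  have d0 : 0 < x - a by rewrite subr_gt0.
  pose n := Num.truncn ((x - a) + (x - a)^-1).
  have hn := Num.Theory.truncnS_gt ((x - a) + (x - a)^-1).
  exists n => //=; rewrite in_itv /=; apply/andP; split.
    rewrite -lerBrDl invf_ple ?posrE ?ltr0n//; apply: ltW.
    by apply: le_lt_trans hn; rewrite lerDr ltW.
  rewrite -lerBlDl; apply: ltW; apply: le_lt_trans hn.
  by rewrite lerDl ltW// invr_gt0.
- move=> k; apply: compact_negl; first exact: segment_compact.
  move=> x /=; rewrite in_itv /= => /andP[h _]; apply: H.
  by apply: lt_le_trans h; rewrite ltrDl invr_gt0 ltr0n.
Qed.

Lemma left_negl b : (forall x, x < b -> ~ msupp mu x) ->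
  mu.-negligible `]-oo, b[%classic.
Proof.
move=> H.
apply: (negligibleS _ (@negligible_bigcup _ _ _ mu
   (fun n => `[b - n.+1%:R, b - (n.+1%:R)^-1]%classic) _)).
- move=> x /=; rewrite in_itv /= => xb.
  have d0 : 0 < b - x by rewrite subr_gt0.
  pose n := Num.truncn ((b - x) + (b - x)^-1).
  have hn := Num.Theory.truncnS_gt ((b - x) + (b - x)^-1).
  exists n => //=; rewrite in_itv /=; apply/andP; split.
    rewrite lerBlDr -lerBlDl; apply: ltW.
    by apply: le_lt_trans hn; rewrite lerDl ltW// invr_gt0.
  rewrite lerBrDr -lerBrDl invf_ple ?posrE ?ltr0n//; apply: ltW.
  by apply: le_lt_trans hn; rewrite lerDr ltW.
- move=> k; apply: compact_negl; first exact: segment_compact.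
  move=> x /=; rewrite in_itv /= => /andP[_ h]; apply: H.
  by apply: le_lt_trans h _; rewrite gtrBl invr_gt0 ltr0n.
Qed.

End Supp.
Section Main.
Context {R : realType} (lam : R) (rho : nat -> probability R R).
Context (hlam : 0 <= lam) (hc : compact (msupp (rho 0%N)))
  (hpos : msupp (rho 0%N) `<=` [set x | 0 <= x]) (hm : mean (rho 0%N) != 0)
  (hrec : forall (t : nat) (S : set R), measurable S ->
     rho t.+1 S = (\int[rho t]_(x in S) (Adens lam (rho t) x)%:E)%E).

Local Notation x0 := (sup (msupp (rho 0%N))).
Local Notation K := (`[0, x0]%classic : set R).

Lemma supp_ne : msupp (rho 0%N) !=set0.
Proof.
have [//|] := pselect (msupp (rho 0%N) !=set0).
move=> nE; have E : msupp (rho 0%N) = set0.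
  by apply/seteqP; split => // x Sx; apply: nE; exists x.
have nS : forall x, ~ msupp (rho 0%N) x by move=> x; rewrite E.
have := negligibleU (@left_negl R (rho 0%N) 0 (fun x _ => nS x))
  (@right_negl R (rho 0%N) (-1) (fun x _ => nS x)).
move=> /(negligibleS (B := setT)) => /(_ _)/negligibleP.
move=> H; exfalso.
have : rho 0%N setT = 0%E.
  apply/H => // x _ /=; rewrite !in_itv /= andbT.
  by case: (ltP x 0) => [|h]; [left|right; apply: lt_le_trans h; rewrite ltrN10].
by rewrite probability_setT => /eqP; rewrite onee_eq0.
Qed.

Lemma supp_ub : has_ubound (msupp (rho 0%N)).
Proof.
have := compact_bounded hc.
move=> [M [Mreal]] /(_ (`|M| + 1)).
rewrite (le_lt_trans (ler_norm _)) ?ltrDl// => /(_ erefl) aM.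
exists (`|M| + 1) => x Sx; have /= h := aM x Sx.
by apply: le_trans h; exact: ler_norm.
Qed.

Lemma le_x0 x : msupp (rho 0%N) x -> x <= x0.
Proof. by move=> Sx; apply: ub_le_sup => //; exact: supp_ub. Qed.

Lemma x0_ge0 : 0 <= x0.
Proof. have [e He] := supp_ne; have /= h := hpos _ He.
apply: (le_trans h); exact: le_x0.
Qed.

Lemma mK : measurable K.
Proof. exact: measurable_itv. Qed.

Lemma K0 : rho 0%N (~` K) = 0%E.
Proof.
apply/negligibleP; first exact: measurableC mK.
have nl : (rho 0%N).-negligible `]-oo, 0[%classic.
  apply: left_negl => x x0' Sx; have := hpos _ Sx => /=.
  by rewrite leNgt x0'.
have nr : (rho 0%N).-negligible `]x0, +oo[%classic.
  apply: right_negl => x x0' Sx; have := @le_x0 x Sx.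
  by rewrite leNgt x0'.
apply: negligibleS (negligibleU nl nr) => x /= nK.
have [h|h] := ltP x 0; [left|right]; rewrite /= in_itv /= ?andbT //.
rewrite ltNge; apply/negP => hx; apply: nK; by rewrite in_itv /= h hx.
Qed.

Lemma mAdens (mu : {measure set R -> \bar R}) :
  measurable_fun setT (fun x => (Adens lam mu x)%:E).
Proof.
apply/measurable_EFinP; rewrite /Adens.
by apply: measurable_funD => //; apply: measurable_funM => //; apply: measurable_funM.
Qed.

Lemma conc t : rho t (~` K) = 0%E.
Proof.
elim: t => [|t IH]; first exact: K0.
rewrite hrec; last exact: measurableC mK.
apply: null_set_integral => //; first exact: measurableC mK.
exact: measurable_funS (mAdens _).
Qed.

Lemma intK t (f : R -> \bar R) : measurable_fun setT f ->
  (\int[rho t]_(x in setT) f x = \int[rho t]_(x in K) f x)%E.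
Proof.
move=> mf; rewrite (integral_mkcond K); apply: ae_eq_integral => //.
  by apply/(measurable_restrictT _ mK); exact: measurable_funS mf.
exists (~` K); split; [exact: measurableC mK|exact: conc|].
move=> x /= h Kx; apply: h => _; by rewrite patchE mem_set.
Qed.


Definition pr t (S : set R) : R := fine (rho t S).

Lemma prE t S : measurable S -> rho t S = (pr t S)%:E.
Proof. by move=> mS; rewrite /pr fineK// fin_num_measure. Qed.

Lemma pr_ge0 t S : measurable S -> 0 <= pr t S.
Proof. by move=> mS; rewrite -lee_fin -prE. Qed.

Lemma pr_le1 t S : measurable S -> pr t S <= 1.
Proof. by move=> mS; rewrite -lee_fin -prE// probability_le1. Qed.

Lemma prK t : pr t K = 1.
Proof.
have := probability_setC (rho t) mK; rewrite conc (prE t _ mK).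
move=> /(congr1 fine) /= h.
by apply/eqP; rewrite -subr_eq0 -opprB oppr_eq0 -h.
Qed.

Lemma mid : measurable_fun setT (fun x : R => x%:E).
Proof. exact: measurableT_comp. Qed.

Definition Ix t := (\int[rho t]_(x in K) x%:E)%E.

Lemma Ix_ge0 t : (0 <= Ix t)%E.
Proof.
by apply: integral_ge0 => x /=; rewrite in_itv /= lee_fin => /andP[].
Qed.

Lemma Ix_le t : (Ix t <= x0%:E)%E.
Proof.
apply: le_trans (ge0_le_integral (f2 := cst x0%:E) _ mK _ _ _ _) _.
- by move=> x /=; rewrite in_itv /= lee_fin => /andP[].
- exact: measurable_funS mid.
- exact: measurable_cst.
- by move=> x /=; rewrite in_itv /= lee_fin => /andP[].
by rewrite integral_cst// [X in (_ * X)%E](prE t K mK) prK mule1.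
Qed.

Lemma Ix_lb t z : 0 <= z -> ((z * pr t `[z, x0]%classic)%:E <= Ix t)%E.
Proof.
move=> z0; have mz : measurable (`[z, x0]%classic : set R) by exact: measurable_itv.
apply: le_trans (ge0_subset_integral _ mz mK _ _ _).
- have -> : ((z * pr t `[z, x0]%classic)%:E =
      \int[rho t]_(x in `[z, x0]%classic) (cst z%:E) x)%E.
    by rewrite integral_cst// EFinM; congr (_ * _)%E; exact/esym/prE.
  apply: ge0_le_integral => //.
  by move=> x /=; rewrite in_itv /= lee_fin => /andP[].
- exact: measurable_funS mid.
- by move=> x /=; rewrite in_itv /= lee_fin => /andP[].
- move=> x /=; rewrite !in_itv /= => /andP[h ->]; rewrite andbT.
  exact: le_trans h.
Qed.

Lemma meanE t : mean (rho t) = fine (Ix t).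
Proof. by rewrite /mean /Rintegral intK//; exact: mid. Qed.

Lemma IxE t : Ix t = (mean (rho t))%:E.
Proof.
rewrite meanE fineK// ge0_fin_numE ?Ix_ge0//.
exact: le_lt_trans (Ix_le t) (ltey _).
Qed.

Lemma mean_le t : mean (rho t) <= x0.
Proof. by rewrite -lee_fin -IxE Ix_le. Qed.

Lemma mean_lb t z : 0 <= z -> z * pr t `[z, x0]%classic <= mean (rho t).
Proof. by move=> z0; rewrite -lee_fin -IxE Ix_lb. Qed.

Lemma g_pos : 0 < gfun lam.
Proof.
rewrite /gfun; case: eqP => [_|/eqP l0]; first exact: ltr01.
have lp : 0 < lam by rewrite lt_neqAle eq_sym l0 hlam.
by apply: divr_gt0 => //; rewrite subr_gt0 -expR0 ltr_expR oppr_lt0.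
Qed.

Lemma g_le1 : gfun lam <= 1.
Proof.
rewrite /gfun; case: eqP => [_|/eqP l0] //.
have lp : 0 < lam by rewrite lt_neqAle eq_sym l0 hlam.
rewrite ler_pdivrMr // mul1r; have := expR_ge1Dx (- lam); lra.
Qed.

Lemma Adens_mono (mu : {measure set R -> \bar R}) x y : 0 < mean mu -> x <= y ->
  Adens lam mu x <= Adens lam mu y.
Proof.
move=> mp xy; rewrite /Adens lerD2l; apply: ler_wpM2r; first by rewrite invr_ge0 ltW.
by apply: ler_wpM2l => //; exact: ltW g_pos.
Qed.

Lemma Adens_ge0 (mu : {measure set R -> \bar R}) x : 0 < mean mu -> 0 <= x ->
  0 <= Adens lam mu x.
Proof.
move=> mp x0'; rewrite /Adens; apply: addr_ge0; first by rewrite subr_ge0 g_le1.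
apply: divr_ge0; last exact: ltW.
by apply: mulr_ge0 => //; exact: ltW g_pos.
Qed.

Lemma step_up (t : nat) (S : set R) (c : R) : measurable S -> (forall x, S x -> 0 <= x) ->
  0 < mean (rho t) -> (forall x, S x -> Adens lam (rho t) x <= c) ->
  pr t.+1 S <= c * pr t S.
Proof.
move=> mS S0 mp Sc.
rewrite -lee_fin -prE// hrec//.
have -> : ((c * pr t S)%:E = \int[rho t]_(x in S) (cst c%:E) x)%E.
  by rewrite integral_cst// EFinM; congr (_ * _)%E; exact/esym/prE.
apply: ge0_le_integral => //.
- by move=> x Sx; rewrite lee_fin Adens_ge0 // S0.
- exact: measurable_funS (mAdens _).
Qed.

Lemma step_lo (t : nat) (S : set R) (c : R) : measurable S -> 0 <= c ->
  (forall x, S x -> c <= Adens lam (rho t) x) ->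
  c * pr t S <= pr t.+1 S.
Proof.
move=> mS c0 Sc.
rewrite -lee_fin -prE// hrec//.
have -> : ((c * pr t S)%:E = \int[rho t]_(x in S) (cst c%:E) x)%E.
  by rewrite integral_cst// EFinM; congr (_ * _)%E; exact/esym/prE.
apply: ge0_le_integral => //.
exact: measurable_funS (mAdens _).
Qed.

Lemma x0_gt0 : 0 < x0.
Proof.
rewrite lt_neqAle x0_ge0 andbT; apply/eqP => h.
have h1 := mean_le 0%N; rewrite -h in h1.
have h2 := @mean_lb 0%N 0 (lexx (0:R)); rewrite mul0r in h2.
by move: hm; rewrite eq_le h1 h2.
Qed.

Lemma supp_pos z : z < x0 -> 0 < pr 0 `[z, x0]%classic.
Proof.
move=> zx.
have [a Sa za] := sup_gt supp_ne zx.
have ax0 := @le_x0 a Sa.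
have oU : open (`]z, x0 + 1[%classic : set R) by apply: interval_open.
have Ua : (`]z, x0 + 1[%classic : set R) a.
  by rewrite /= in_itv /= za /=; apply: le_lt_trans ax0 _; rewrite ltrDl.
have := Sa _ oU Ua.
have mz : measurable (`[z, x0]%classic : set R) by exact: measurable_itv.
have mr : measurable (`]x0, +oo[%classic : set R) by exact: measurable_itv.
have h0 : rho 0%N `]x0, +oo[%classic = 0%E.
  apply/eqP; rewrite eq_le measure_ge0 andbT -(conc 0).
  apply: (le_measure (rho 0%N)); rewrite ?inE; [exact: mr|exact: measurableC mK|].
  move=> x /=; rewrite in_itv /= andbT => h; rewrite in_itv /= => /andP[_].
  by rewrite leNgt h.
have hU : (rho 0%N (`]z, (x0 + 1)%R[%classic : set R) <=
    rho 0%N `[z, x0]%classic + rho 0%N `]x0, +oo[%classic)%E.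
  apply: le_trans (measureU2 (rho 0%N) mz mr).
  apply: le_measure; rewrite ?inE; [exact: measurable_itv|exact: measurableU|].
  move=> x /=; rewrite !in_itv /= => /andP[zx' _].
  by have [h|h] := leP x x0; [left; rewrite (ltW zx')|right].
rewrite h0 adde0 in hU.
move=> /lt_le_trans /(_ hU).
by rewrite (prE 0%N _ mz) lte_fin.
Qed.

Lemma T0pos t : 0 < pr t `[x0 / 2, x0]%classic.
Proof.
have x0p := x0_gt0.
have hz : 0 <= x0 / 2 by rewrite divr_ge0 // ltW.
have mT : measurable (`[x0 / 2, x0]%classic : set R) by exact: measurable_itv.
elim: t => [|t IH]; first by apply: supp_pos; lra.
have mp : 0 < mean (rho t).
  apply: lt_le_trans (@mean_lb t _ hz); apply: mulr_gt0 => //; lra.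
set c := Adens lam (rho t) (x0 / 2).
have c0 : 0 < c.
  rewrite /c /Adens; have := g_le1; have := g_pos => g1 g2.
  have : 0 < gfun lam * (x0 / 2) / mean (rho t).
    by apply: divr_gt0 => //; apply: mulr_gt0 => //; lra.
  lra.
apply: lt_le_trans (@step_lo t _ c mT (ltW c0) _); first exact: mulr_gt0.
move=> x /=; rewrite in_itv /= => /andP[h _]; exact: Adens_mono.
Qed.

Lemma mean_pos t : 0 < mean (rho t).
Proof.
have x0p := x0_gt0.
have hz : 0 <= x0 / 2 by rewrite divr_ge0 // ltW.
apply: lt_le_trans (@mean_lb t _ hz); apply: mulr_gt0; [lra|exact: T0pos].
Qed.

Definition qf (y z : R) := (1 - gfun lam + gfun lam * y / x0) /
  (1 - gfun lam + gfun lam * z / x0).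

Lemma qf_ge0 y z : 0 <= y -> y < z -> 0 <= qf y z.
Proof.
move=> y0 yz; have x0p := x0_gt0; have g1 := g_le1; have g0 := g_pos.
have h1 : 0 <= gfun lam * y / x0 by rewrite divr_ge0 ?mulr_ge0 // ltW.
have h2 : 0 <= gfun lam * z / x0 by rewrite divr_ge0 ?mulr_ge0 // ltW //; lra.
apply: divr_ge0; lra.
Qed.

Lemma qf_lt1 y z : 0 <= y -> y < z -> qf y z < 1.
Proof.
move=> y0 yz; have x0p := x0_gt0; have g1 := g_le1; have g0 := g_pos.
have h1 : 0 <= gfun lam * y / x0 by rewrite divr_ge0 ?mulr_ge0 // ltW.
have h2 : gfun lam * y / x0 < gfun lam * z / x0.
  by rewrite ltr_pM2r ?invr_gt0 // ltr_pM2l.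
rewrite /qf ltr_pdivrMr; lra.
Qed.

Lemma decay y z : 0 <= y -> y < z -> z <= x0 -> forall t,
  pr t `[0, y]%classic * pr 0 `[z, x0]%classic <=
  (qf y z) ^+ t * pr t `[z, x0]%classic.
Proof.
move=> y0 yz zx0; have x0p := x0_gt0; have g1 := g_le1; have g0 := g_pos.
have mS : measurable (`[0, y]%classic : set R) by exact: measurable_itv.
have mT : measurable (`[z, x0]%classic : set R) by exact: measurable_itv.
have p0 := pr_ge0 0 _ mT.
elim => [|t IH].
  rewrite expr0 mul1r; have := pr_ge0 0 _ mS; have := pr_le1 0 _ mS; nra.
have mp := mean_pos t.
set cy := Adens lam (rho t) y; set cz := Adens lam (rho t) z.
have A1 : pr t.+1 `[0, y]%classic <= cy * pr t `[0, y]%classic.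
  apply: step_up => //.
    by move=> x /=; rewrite in_itv /= => /andP[].
  by move=> x /=; rewrite in_itv /= => /andP[_ h]; exact: Adens_mono.
have cz0 : 0 <= cz by apply: Adens_ge0 => //; lra.
have A2 : cz * pr t `[z, x0]%classic <= pr t.+1 `[z, x0]%classic.
  apply: step_lo => //.
  by move=> x /=; rewrite in_itv /= => /andP[h _]; exact: Adens_mono.
have cy0 : 0 <= cy by exact: Adens_ge0.
have A3 : cy <= qf y z * cz.
  have ml := mean_le t.
  have iv : x0^-1 <= (mean (rho t))^-1 by rewrite lef_pV2 ?posrE.
  have D0 : 0 < 1 - gfun lam + gfun lam * z / x0.
    have : 0 < gfun lam * z / x0 by rewrite divr_gt0 ?mulr_gt0 //; lra.
    lra.
  rewrite /qf mulrAC ler_pdivlMr // /cy /cz /Adens.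
  have : 0 <= (1 - gfun lam) * gfun lam * (z - y) * ((mean (rho t))^-1 - x0^-1).
    by rewrite !mulr_ge0 //; lra.
  nra.
have q0 := @qf_ge0 y z y0 yz.
have qt0 : 0 <= qf y z ^+ t by exact: exprn_ge0.
have pT0 := pr_ge0 t _ mT; have pS0 := pr_ge0 t _ mS.
have h1 : 0 <= (cy * pr t `[0, y]%classic - pr t.+1 `[0, y]%classic) *
   pr 0 `[z, x0]%classic by apply: mulr_ge0 => //; lra.
have h2 : 0 <= cy * (qf y z ^+ t * pr t `[z, x0]%classic -
   pr t `[0, y]%classic * pr 0 `[z, x0]%classic) by apply: mulr_ge0 => //; lra.
have h3 : 0 <= (qf y z * cz - cy) * (qf y z ^+ t * pr t `[z, x0]%classic).
  by apply: mulr_ge0; [lra|exact: mulr_ge0].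
have h4 : 0 <= qf y z * qf y z ^+ t * (pr t.+1 `[z, x0]%classic -
   cz * pr t `[z, x0]%classic) by apply: mulr_ge0; [exact: mulr_ge0|lra].
rewrite exprS; nra.
Qed.

Lemma bint t (D : set R) (f : R -> R) : measurable D -> continuous f ->
  (exists M, forall x, D x -> `|f x| <= M) -> (rho t).-integrable D (EFin \o f).
Proof.
move=> mD cf [M hM]; apply: measurable_bounded_integrable => //.
- by apply: le_lt_trans (probability_le1 (rho t) mD) _; exact: ltey.
- exact: measurable_funS (continuous_measurable_fun cf).
- rewrite /bounded_near; near=> M0 => x Dx /=; apply: le_trans (hM x Dx) _.
  by near: M0; apply: nbhs_pinfty_ge; exact: num_real.
Unshelve. all: end_near. Qed.

Lemma main_conv (phi : R -> R) : continuous phi ->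
  (fun t => Rintegral (rho t) setT phi) @ \oo --> phi x0.
Proof.
move=> cphi.
have x0p := x0_gt0.
have [c Kc Mc] : exists2 c, c \in `[0, x0] &
    forall t, t \in `[0, x0] -> `|phi t| <= `|phi c|.
  apply: EVT_max; first exact: x0_ge0.
  by apply: continuous_subspaceT => x; apply: cvg_norm; exact: cphi.
set M := `|phi c|.
have M0 : 0 <= M by exact: normr_ge0.
have Kx0 : x0 \in `[0, x0] by rewrite in_itv /= x0_ge0 lexx.
have hM : forall x, K x -> `|phi x0 - phi x| <= 2 * M.
  move=> x Kx; have h1 := Mc x Kx; have h2 := Mc x0 Kx0.
  apply: le_trans (ler_normB _ _) _; rewrite -/M in h1 h2; lra.
apply/cvgrPdist_le => e e0.
have e2 : 0 < e / 2 by lra.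
move/cvgrPdist_lt: (cphi x0) => /(_ _ e2) /nbhs_ballP [d /= d0 Hd].
set del := Num.min d x0.
have del0 : 0 < del by rewrite lt_min d0 x0p.
have deld : del <= d by rewrite ge_min lexx.
have delx : del <= x0 by rewrite ge_min lexx orbT.
set y := x0 - del.
have y0 : 0 <= y by rewrite /y; lra.
have yx : y < x0 by rewrite /y; lra.
set z := (y + x0) / 2.
have yz : y < z by rewrite /z; lra.
have zx : z < x0 by rewrite /z; lra.
set q := qf y z.
have q0 := @qf_ge0 y z y0 yz; have q1 := @qf_lt1 y z y0 yz.
have mS : measurable (`[0, y]%classic : set R) by exact: measurable_itv.
have mT : measurable (`[z, x0]%classic : set R) by exact: measurable_itv.
have mY : measurable (`]y, x0]%classic : set R) by exact: measurable_itv.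
set p := pr 0 `[z, x0]%classic.
have p0 : 0 < p by apply: supp_pos.
set eta := e * p / (4 * M + 1).
have eta0 : 0 < eta by rewrite /eta divr_gt0 ?mulr_gt0 //; lra.
have : `|q| < 1 by rewrite ger0_norm.
move=> /cvg_expr /cvgrPdist_lt /(_ _ eta0); apply: filterS => t Ht.
have qt : q ^+ t <= eta.
  by move: Ht; rewrite sub0r normrN ger0_norm ?exprn_ge0 // => /ltW.
have dec := @decay y z y0 yz (ltW zx) t.
have pS0 := pr_ge0 t _ mS; have pT0 := pr_ge0 t _ mT; have pT1 := pr_le1 t _ mT.
have hS : 2 * M * pr t `[0, y]%classic <= e / 2.
  have h1 : pr t `[0, y]%classic * p <= eta.
    apply: le_trans dec _; apply: le_trans qt.
    by rewrite -[leRHS]mulr1 ler_wpM2l // exprn_ge0.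
  have h2 : pr t `[0, y]%classic * (4 * M + 1) <= e.
    rewrite -(ler_pM2r p0) mulrAC; apply: le_trans (ler_wpM2r _ h1) _.
      lra.
    have n0 : 4 * M + 1 != 0 by rewrite gt_eqF //; lra.
    by rewrite /eta divfK.
  nra.
have mphi : measurable_fun setT (fun x => (phi x)%:E).
  by apply/measurable_EFinP; exact: continuous_measurable_fun.
have -> : Rintegral (rho t) setT phi = Rintegral (rho t) K phi.
  by rewrite /Rintegral intK.
have iphi : (rho t).-integrable K (EFin \o phi).
  by apply: (@bint t K phi mK cphi); exists M => x Kx; exact: Mc.
have ccst : continuous (cst (phi x0) : R -> R) by exact: cst_continuous.
have icst : (rho t).-integrable K (EFin \o cst (phi x0)).
  by apply: (@bint t K _ mK ccst); exists `|phi x0| => x _.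
have -> : phi x0 = Rintegral (rho t) K (cst (phi x0)).
  by rewrite Rintegral_cst; [rewrite -/(pr t K) prK mulr1|exact: mK].
rewrite -(RintegralB mK icst iphi).
have cdiff : continuous (fun x => cst (phi x0) x - phi x).
  by move=> x; apply: cvgB; [exact: cvg_cst|exact: cphi].
have cabs : continuous (fun x => `|cst (phi x0) x - phi x|).
  by move=> x; apply: cvg_norm; exact: cdiff.
have KU : K = `[0, y]%classic `|` `]y, x0]%classic.
  apply/seteqP; split => x /=.
    rewrite in_itv /= => /andP[h1 h2].
    by have [h|h] := leP x y; [left|right]; rewrite /= in_itv /= ?h1 ?h2 ?h.
  by case; rewrite /= !in_itv /= => /andP[h1 h2]; apply/andP; split; lra.
apply: le_trans (le_normr_Rintegral mK _) _.
  by apply: (@bint t K _ mK cdiff); exists (2 * M) => x Kx; exact: hM.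
have mU : measurable (`[0, y]%classic `|` `]y, x0]%classic : set R).
  exact: measurableU.
have hM' : forall x, (`[0, y]%classic `|` `]y, x0]%classic) x ->
    `|cst (phi x0) x - phi x| <= 2 * M.
  by move=> x; rewrite -KU => Kx; exact: hM.
rewrite KU Rintegral_setU //; last 2 first.
- by apply: (@bint t _ _ mU cabs); exists (2 * M) => x Ux; rewrite normr_id; exact: hM'.
- apply/disj_setPS => x [] /=; rewrite !in_itv /=.
  by move=> /andP[_ h1] /andP[h2 _]; lra.
have i1 : (rho t).-integrable `[0, y]%classic
    (EFin \o (fun x => `|cst (phi x0) x - phi x|)).
  apply: (@bint t _ _ mS cabs); exists (2 * M) => x Sx; rewrite normr_id; apply: hM'; by left.
have i3 : (rho t).-integrable `]y, x0]%classic
    (EFin \o (fun x => `|cst (phi x0) x - phi x|)).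
  apply: (@bint t _ _ mY cabs); exists (2 * M) => x Sx; rewrite normr_id; apply: hM'; by right.
have i2 : (rho t).-integrable `[0, y]%classic (EFin \o (fun _ => 2 * M)).
  by apply: (@bint t _ _ mS (@cst_continuous _ _ (2 * M))); exists `|2 * M|.
have i4 : (rho t).-integrable `]y, x0]%classic (EFin \o (fun _ => e / 2)).
  by apply: (@bint t _ _ mY (@cst_continuous _ _ (e / 2))); exists `|e / 2|.
apply: le_trans (lerD (le_Rintegral mS i1 i2 _) (le_Rintegral mY i3 i4 _)) _.
- by move=> x Sx; apply: hM'; left.
- move=> x /=; rewrite in_itv /= => /andP[h1 h2].
  apply: ltW; apply: Hd; rewrite /ball /= ger0_norm; last by rewrite subr_ge0.
  rewrite /y in h1; lra.
rewrite !Rintegral_cst // -/(pr t `[0, y]%classic) -/(pr t `]y, x0]%classic).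
have := pr_le1 t _ mY; have := pr_ge0 t _ mY; nra.
Qed.

End Main.

Theorem mainTheorem3 (R : realType) (lam : R) (rho : nat -> probability R R) :
  0 <= lam ->
  compact (msupp (rho 0%N)) ->
  msupp (rho 0%N) `<=` [set x | 0 <= x] ->
  mean (rho 0%N) != 0 ->
  (forall (t : nat) (S : set R), measurable S ->
     rho t.+1 S = (\int[rho t]_(x in S) (Adens lam (rho t) x)%:E)%E) ->
  forall phi : R -> R, continuous phi ->
    compact (closure (phi @^-1` [set~ 0])) ->
    (fun t => Rintegral (rho t) setT phi) @ \oo --> phi (sup (msupp (rho 0%N))).
Proof.
move=> hlam hc hpos hm hrec phi cphi _.
exact: (@main_conv R lam rho hlam hc hpos hm hrec phi cphi).
Qed.
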